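(* Any finite polyhedral complex $K$ in $\mathbb{R}^n$ is homotopy equivalent to a polyhedral complex $K'$ in $\mathbb{R}^n$ in which no cell contains a straight line, and $K$ and $K'$ have equal numbers of cells.
   Context: A polyhedral complex in $\mathbb{R}^n$ is a finite collection of closed convex polyhedra (cells), closed under taking faces, any two meeting in a common face; it is identified with the union of its cells. *)

(* Defs.v *)
From HB Require Import structures.
From mathcomp Require Import all_boot all_order all_algebra.
From mathcomp Require Import all_classical all_reals topology normedtype.
Set Implicit Arguments. Unset Strict Implicit. Unset Printing Implicit Defensive.
Import Order.TTheory GRing.Theory Num.Theory.
Import numFieldNormedType.Exports.
Local Open Scope classical_set_scope.
Local Open Scope ring_scope.

Section PolyDefs.
Variables (R : realType) (n : nat).
Local Notation V := 'rV[R]_n.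

Definition dotp (x y : V) : R := \sum_(i < n) x ord0 i * y ord0 i.

Definition polyhedron (P : set V) : Prop :=
  exists (m : nat) (a : 'I_m -> V) (b : 'I_m -> R),
    P = [set x | forall i, dotp (a i) x <= b i].

(* F is a (nonempty) face of the polyhedron P: the intersection of P with a
   supporting hyperplane {c.x = d} of a valid inequality c.x <= d
   (c = 0, d = 0 gives P itself). *)
Definition face_of (F P : set V) : Prop :=
  F !=set0 /\
  exists (c : V) (d : R),
    (forall x, P x -> dotp c x <= d) /\ F = P `&` [set x | dotp c x = d].

Definition polyhedral_complex (K : set (set V)) : Prop :=
  [/\ finite_set K,
      (forall P, K P -> polyhedron P /\ P !=set0),
      (forall P F, K P -> face_of F P -> K F) &
      (forall P Q, K P -> K Q ->
         P `&` Q = set0 \/ (face_of (P `&` Q) P /\ face_of (P `&` Q) Q))].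

Definition underlying (K : set (set V)) : set V := \bigcup_(P in K) P.

Definition contains_line (P : set V) : Prop :=
  exists (x v : V), v != 0 /\ forall t : R, P (x + t *: v).

Definition homotopic_on (A B : set V) (f g : V -> V) : Prop :=
  exists H : R * V -> V,
    {within @setX R V `[0, 1]%classic A, continuous H} /\
    (forall t x, `[0, 1]%classic t -> A x -> B (H (t, x))) /\
    (forall x, A x -> H (0, x) = f x) /\
    (forall x, A x -> H (1, x) = g x).

Definition homotopy_equivalent (A B : set V) : Prop :=
  exists f g : V -> V,
    [/\ {within A, continuous f} /\ {within B, continuous g},
        (forall x, A x -> B (f x)), (forall y, B y -> A (g y)),
        homotopic_on A A (g \o f) id & homotopic_on B B (f \o g) id].

End PolyDefs.

(* Main.v *)
Require Import Defs.
From HB Require Import structures.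
From mathcomp Require Import all_boot all_order all_algebra.
From mathcomp Require Import all_classical all_reals topology normedtype.
From mathcomp Require Import lra.
Import numFieldNormedType.Exports.
Set Implicit Arguments. Unset Strict Implicit. Unset Printing Implicit Defensive.
Import Order.TTheory GRing.Theory Num.Theory.
Local Open Scope classical_set_scope.
Local Open Scope ring_scope.

Section Aux.
Variables (R : realType) (n : nat).
Local Notation V := 'rV[R]_n.

Lemma dotpE (a x : V) : dotp a x = (a *m x^T) ord0 ord0.
Proof. by rewrite /dotp !mxE; apply: eq_bigr => i _; rewrite mxE. Qed.

Lemma dotpDr (a x y : V) : dotp a (x + y) = dotp a x + dotp a y.
Proof. by rewrite /dotp -big_split; apply: eq_bigr => i _; rewrite mxE mulrDr. Qed.

Lemma dotpZr (a x : V) t : dotp a (t *: x) = t * dotp a x.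
Proof. by rewrite /dotp mulr_sumr; apply: eq_bigr => i _; rewrite mxE mulrCA. Qed.

Lemma dotpNl (a x : V) : dotp (- a) x = - dotp a x.
Proof. by rewrite /dotp -sumrN; apply: eq_bigr => i _; rewrite mxE mulNr. Qed.

Lemma dotp_mulmx (c x : V) (M : 'M[R]_n) : dotp c (x *m M) = dotp (c *m M^T) x.
Proof. by rewrite !dotpE trmx_mul mulmxA. Qed.

Lemma slope0 (a s b : R) : (forall t, a + t * s <= b) -> s = 0.
Proof.
move=> H; apply/eqP; apply/negPn/negP => s0.
have := H ((b - a + 1) / s); rewrite divfK //; lra.
Qed.

Definition lin (P : set V) : set V :=
  [set v | forall x, P x -> forall t : R, P (x + t *: v)].

Lemma poly_lineP P m (a : 'I_m -> V) b x0 v :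
  P = [set x | forall i, dotp (a i) x <= b i] -> P x0 ->
  (forall t, P (x0 + t *: v)) -> forall i, dotp (a i) v = 0.
Proof.
move=> PE _ H i; apply: (@slope0 (dotp (a i) x0) _ (b i)) => t.
have := H t; rewrite PE /= => /(_ i); by rewrite dotpDr dotpZr.
Qed.

Lemma lin_poly (P : set V) x0 v : polyhedron P -> P x0 ->
  (forall t, P (x0 + t *: v)) -> lin P v.
Proof.
case=> m [a [b PE]] Px0 H.
have Hv := poly_lineP PE Px0 H.
move=> x Px t; move: Px; rewrite PE /= => Px i.
by rewrite dotpDr dotpZr Hv mulr0 addr0; exact: Px.
Qed.

Lemma linmx_ex (P : set V) : polyhedron P ->
  exists B : 'M[R]_n, forall v, lin P v <-> (v <= B)%MS.
Proof.
case=> m [a [b PE]]; case: (pselect (P !=set0)) => [[x0 Px0]|P0].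
  exists (kermx (\matrix_(j < n, i < m) a i ord0 j)) => v; rewrite sub_kermx.
  split.
    move=> Lv; apply/eqP/rowP => i; rewrite !mxE.
    transitivity (dotp (a i) v); last exact: (poly_lineP PE Px0 (Lv x0 Px0) i).
    by rewrite /dotp; apply: eq_bigr => j _; rewrite mxE mulrC.
  move/eqP => H x Px t; move: Px; rewrite PE /= => Px i.
  rewrite dotpDr dotpZr.
  have -> : dotp (a i) v = 0.
    move/rowP: H => /(_ i); rewrite !mxE => <-; rewrite /dotp.
    by apply: eq_bigr => j _; rewrite mxE mulrC.
  by rewrite mulr0 addr0; exact: Px.
exists 1%:M => v; rewrite submx1; split=> // _ x Px.
by exfalso; apply: P0; exists x.
Qed.

Lemma lin_face (P F : set V) : polyhedron P -> face_of F P -> lin F = lin P.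
Proof.
move=> polyP [[x0 Fx0] [c [d [valid FE]]]]; subst F.
case: Fx0 => Px0 cx0.
apply/seteqP; split => v Lv.
  apply: (lin_poly (x0:=x0)) => // t.
  by case: (Lv x0 (conj Px0 cx0) t).
move=> x [Px cx] t; split; first exact: Lv.
have cv : dotp c v = 0.
  apply: (@slope0 (dotp c x) _ d) => s.
  by have := valid _ (Lv x Px s); rewrite dotpDr dotpZr.
by rewrite /= dotpDr dotpZr cv mulr0 addr0.
Qed.

Lemma poly_eqs k (c : 'I_k -> V) :
  polyhedron [set x | forall j, dotp (c j) x = 0].
Proof.
exists (k + k), (fun i => match fintype.split i with inl j => c j | inr j => - c j end),
  (fun=> 0).
apply/seteqP; split => x /= H.
  by move=> i; case: (fintype.split i) => j; rewrite ?dotpNl H ?oppr0.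
move=> j; apply/eqP; rewrite eq_le; apply/andP; split.
  by have := H (unsplit (inl j)); rewrite unsplitK.
by have := H (unsplit (inr j)); rewrite unsplitK dotpNl oppr_le0.
Qed.

Lemma poly_I (P Q : set V) : polyhedron P -> polyhedron Q -> polyhedron (P `&` Q).
Proof.
case=> m1 [a1 [b1 ->]] [m2 [a2 [b2 ->]]].
exists (m1 + m2), (fun i => match fintype.split i with inl j => a1 j | inr j => a2 j end),
  (fun i => match fintype.split i with inl j => b1 j | inr j => b2 j end).
apply/seteqP; split => x /=.
  by case=> H1 H2 i; case: (fintype.split i) => j.
move=> H; split => j.
  by have := H (unsplit (inl j)); rewrite unsplitK.
by have := H (unsplit (inr j)); rewrite unsplitK.
Qed.

End Aux.
Section Proj.
Variables (R : realType) (n : nat).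
Local Notation V := 'rV[R]_n.

Definition linlike (S : set V) :=
  exists B : 'M[R]_n, forall v, S v <-> (v <= B)%MS.
Definition Bm (S : set V) : 'M[R]_n :=
  xget 0 [set B : 'M[R]_n | forall v, S v <-> (v <= B)%MS].
Definition Cm (S : set V) := ((Bm S)^C)%MS.
Definition Pi (S : set V) := proj_mx (Bm S) (Cm S).
Definition Wsp (S : set V) : set V := [set x | (x <= Cm S)%MS].
Definition fm (S : set V) (x : V) := x - x *m Pi S.
Definition slice (P : set V) := P `&` Wsp (lin P).

Lemma BmP S : linlike S -> forall v, S v <-> (v <= Bm S)%MS.
Proof. by move=> h; exact: (xgetPex 0 h). Qed.

Lemma Pi_in S x : linlike S -> S (x *m Pi S).
Proof. by move=> h; apply/(BmP h); exact: proj_mx_sub. Qed.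

Lemma fm_W S x : Wsp S (fm S x).
Proof.
rewrite /Wsp /fm /=; apply: proj_mx_compl_sub.
exact: submx_full (addsmx_compl_full _).
Qed.

Lemma fm_id S x : Wsp S x -> fm S x = x.
Proof. by move=> h; rewrite /fm proj_mx_0 ?subr0 //; exact: capmx_compl. Qed.

Lemma SW0 S v : linlike S -> S v -> Wsp S v -> v = 0.
Proof.
move=> h Sv Wv; apply/eqP; rewrite -submx0 -(capmx_compl (Bm S)) sub_capmx.
by apply/andP; split; [apply/(BmP h)|].
Qed.

Lemma WB S x y : Wsp S x -> Wsp S y -> Wsp S (x - y).
Proof.
rewrite /Wsp /= !submxE => /eqP hx /eqP hy.
by rewrite mulmxBl hx hy subrr.
Qed.

Lemma W_poly S : polyhedron (Wsp S).
Proof.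
have -> : Wsp S = [set x | forall j, dotp (\row_i cokermx (Cm S) i j) x = 0].
  apply/seteqP; split => x /=; rewrite /Wsp /= submxE.
    move=> /eqP/rowP H j; have := H j; rewrite !mxE => <-.
    by rewrite /dotp; apply: eq_bigr => i _; rewrite mxE mulrC.
  move=> H; apply/eqP/rowP => j; rewrite !mxE.
  transitivity (dotp (\row_i cokermx (Cm S) i j) x); last exact: H.
  rewrite /dotp; apply: eq_bigr => i _; rewrite [(\row_i0 _) _ _]mxE mulrC.
  by rewrite (_ : 0 = ord0) //; apply/val_inj.
exact: (poly_eqs (fun j => \row_i cokermx (Cm S) i j)).
Qed.

Lemma lin_linlike (P : set V) : polyhedron P -> linlike (lin P).
Proof. by move=> pP; have [B HB] := linmx_ex pP; exists B. Qed.

Lemma lin_move (P : set V) x v : lin P v -> P x -> P (x - v).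
Proof.
by move=> Lv Px; have := Lv x Px (-1); rewrite scaleN1r.
Qed.

Lemma lin_moveD (P : set V) x v : lin P v -> P x -> P (x + v).
Proof.
by move=> Lv Px; have := Lv x Px 1; rewrite scale1r.
Qed.

Lemma fm_in (P : set V) x : polyhedron P -> P x -> slice P (fm (lin P) x).
Proof.
move=> pP Px; split; last exact: fm_W.
by apply: lin_move => //; apply: Pi_in; exact: lin_linlike.
Qed.

Lemma fm_back (P : set V) x : polyhedron P -> P (fm (lin P) x) -> P x.
Proof.
move=> pP Pf; have := lin_moveD (Pi_in x (lin_linlike pP)) Pf.
by rewrite /fm subrK.
Qed.

Lemma slice_poly (P : set V) : polyhedron P -> polyhedron (slice P).
Proof. by move=> pP; apply: poly_I => //; exact: W_poly. Qed.

Lemma slice_noline (P : set V) : polyhedron P -> ~ contains_line (slice P).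
Proof.
move=> pP [x [v [v0 H]]].
have Lv : lin P v.
  apply: (lin_poly (x0 := x)) => // [|t]; last by case: (H t).
  by have := (H 0).1; rewrite scale0r addr0.
have Wv : Wsp (lin P) v.
  have := WB (H 1).2 (H 0).2; by rewrite scale0r addr0 scale1r addrC addKr.
by move/eqP: v0; apply; exact: (SW0 (lin_linlike pP)).
Qed.

End Proj.
Section Complex.
Variables (R : realType) (n : nat).
Local Notation V := 'rV[R]_n.
Local Notation sl := (@slice R n).

Lemma face_W (F P W : set V) : face_of F P -> (F `&` W) !=set0 ->
  face_of (F `&` W) (P `&` W).
Proof.
case=> _ [c [d [val FE]]] ne; split => //; exists c, d; split.
  by move=> x [Px _]; exact: val.
by rewrite FE setIAC.
Qed.

Lemma fmE (S : set V) x : fm S x = x *m (1%:M - Pi S).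
Proof. by rewrite /fm mulmxBr mulmx1. Qed.

Variable K : set (set V).
Hypothesis hK : polyhedral_complex K.

Lemma cell_poly P : K P -> polyhedron P.
Proof. by case: hK => _ H _ _ /H []. Qed.

Lemma cell_ne P : K P -> P !=set0.
Proof. by case: hK => _ H _ _ /H []. Qed.

Lemma lin_meet P Q x : K P -> K Q -> P x -> Q x -> lin P = lin Q.
Proof.
move=> KP KQ Px Qx; case: hK => _ _ _ /(_ P Q KP KQ) [PQ0|[fP fQ]].
  by have : (P `&` Q) x by []; rewrite PQ0.
by rewrite -(lin_face (cell_poly KP) fP) (lin_face (cell_poly KQ) fQ).
Qed.

Lemma slice_ne P : K P -> slice P !=set0.
Proof.
move=> KP; case: (cell_ne KP) => x Px.
by exists (fm (lin P) x); exact: fm_in (cell_poly KP) Px.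
Qed.

Lemma slice_inj : {in K &, injective sl}.
Proof.
move=> P Q; rewrite !inE => KP KQ ePQ.
case: (slice_ne KP) => z Pz; have Qz : slice Q z by rewrite -ePQ.
have LPQ := lin_meet KP KQ Pz.1 Qz.1.
apply/seteqP; split => y Hy.
  have := fm_in (cell_poly KP) Hy; rewrite ePQ LPQ => -[Qf _].
  exact: fm_back (cell_poly KQ) Qf.
have := fm_in (cell_poly KQ) Hy; rewrite -ePQ -LPQ => -[Pf _].
exact: fm_back (cell_poly KP) Pf.
Qed.

Lemma slice_faces P G : K P -> face_of G (slice P) -> (sl @` K) G.
Proof.
move=> KP [[g0 Gg0] [c [d [val GE]]]].
set S := lin P; set M := 1%:M - Pi S; set c' := c *m M^T.
have fmc x : dotp c' x = dotp c (fm S x) by rewrite fmE dotp_mulmx.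
have pP := cell_poly KP.
set F := P `&` [set x | dotp c' x = d].
have sG : slice P g0 by rewrite GE in Gg0; case: Gg0.
have fF : face_of F P.
  split.
    exists g0; split; first by case: sG.
    rewrite /= fmc fm_id; last by case: sG.
    by rewrite GE in Gg0; case: Gg0.
  exists c', d; split => //.
  by move=> x Px; rewrite fmc; apply: val; exact: fm_in.
have KF : K F by case: hK => _ _ /(_ P F KP fF).
exists F => //.
rewrite /slice (lin_face pP fF) GE -/S.
apply/seteqP; split => x /=.
  by case=> [[Px cx] Wx]; split; [split|rewrite -(fm_id Wx) -fmc].
by case=> [[Px Wx] cx]; split => //; split => //=; rewrite fmc fm_id.
Qed.

Lemma slice_meet P Q : K P -> K Q ->
  slice P `&` slice Q = set0 \/
  (face_of (slice P `&` slice Q) (slice P) /\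
   face_of (slice P `&` slice Q) (slice Q)).
Proof.
move=> KP KQ; case: hK => _ _ _ /(_ P Q KP KQ) [PQ0|[fP fQ]].
  left; apply/seteqP; split => // x [[Px _] [Qx _]].
  by have : (P `&` Q) x by []; rewrite PQ0.
have [x0 [Px0 Qx0]] := fP.1.
have LPQ := lin_meet KP KQ Px0 Qx0.
have E : slice P `&` slice Q = (P `&` Q) `&` Wsp (lin P).
  rewrite /slice -LPQ; apply/seteqP; split => x /=; tauto.
have ne : ((P `&` Q) `&` Wsp (lin P)) !=set0.
  exists (fm (lin P) x0); split; last exact: fm_W.
  split; first by case: (fm_in (cell_poly KP) Px0).
  by have := fm_in (cell_poly KQ) Qx0; rewrite -LPQ => -[].
right; rewrite E; split; first exact: face_W.
rewrite /slice -LPQ; exact: face_W.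
Qed.

Lemma complex_slice : polyhedral_complex (sl @` K).
Proof.
split.
- by case: hK => fin _ _ _; exact: finite_image.
- move=> _ [P KP <-]; split; first exact: slice_poly (cell_poly KP).
  exact: slice_ne.
- by move=> _ G [P KP <-]; exact: slice_faces.
- by move=> _ _ [P KP <-] [Q KQ <-]; exact: slice_meet.
Qed.

Lemma slice_card : card_eq K (sl @` K).
Proof. by rewrite card_eq_sym; exact: inj_card_eq slice_inj. Qed.

End Complex.
Section Topo.

Lemma paste_seq (T U : topologicalType) (I : eqType) (C : I -> set T)
    (f : T -> U) (s : seq I) :
  (forall i, i \in s -> closed (C i) /\ {within C i, continuous f}) ->
  {within \big[setU/set0]_(i <- s) C i, continuous f}.
Proof.
elim: s => [|i s IH] H; first by rewrite big_nil; exact: continuous_subspace0.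
rewrite big_cons; apply: withinU_continuous.
- by case: (H i (mem_head _ _)).
- apply: closed_bigsetU => j js; case: (H j) => //.
  by rewrite inE js orbT.
- by case: (H i (mem_head _ _)).
- by apply: IH => j js; apply: H; rewrite inE js orbT.
Qed.

Lemma paste (T U : topologicalType) (I : choiceType) (A : set I)
    (C : I -> set T) (f : T -> U) :
  finite_set A -> (forall i, A i -> closed (C i)) ->
  (forall i, A i -> {within C i, continuous f}) ->
  {within \bigcup_(i in A) C i, continuous f}.
Proof.
move=> finA cC fC; rewrite -bigsetU_fset_set //; apply: paste_seq => i.
by rewrite in_fset_set // in_setE => Ai; split; [exact: cC|exact: fC].
Qed.

Lemma within_eq (T U : topologicalType) (C : set T) (f g : T -> U) :
  (forall x, C x -> f x = g x) -> continuous g -> {within C, continuous f}.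
Proof.
move=> e cg; apply: (@subspace_eq_continuous _ _ _ g).
  by move=> x; rewrite in_setE => Cx; rewrite /from_subspace e.
exact: continuous_subspaceT.
Qed.

Variables (R : realType) (n : nat).
Local Notation V := 'rV[R]_n.

Lemma cont_sum (T : topologicalType) (I : Type) (s : seq I) (F : I -> T -> R) :
  (forall i, continuous (F i)) -> continuous (fun x => \sum_(i <- s) F i x).
Proof.
move=> cF; elim: s => [|i s IH].
  by under eq_fun do rewrite big_nil; move=> x; exact: cvg_cst.
under eq_fun do rewrite big_cons; move=> x; apply: continuousD; [exact: cF|exact: IH].
Qed.

Lemma cont_sumV (T : topologicalType) (I : Type) (s : seq I) (F : I -> T -> V) :
  (forall i, continuous (F i)) -> continuous (fun x => \sum_(i <- s) F i x).
Proof.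
move=> cF; elim: s => [|i s IH].
  by under eq_fun do rewrite big_nil; move=> x; exact: cvg_cst.
under eq_fun do rewrite big_cons; move=> x; apply: continuousD; [exact: cF|exact: IH].
Qed.

Lemma dotp_cont (a : V) : continuous (fun x : V => dotp a x).
Proof.
apply: cont_sum => i x; apply: continuousM; first exact: cst_continuous.
exact: (@coord_continuous R 1 n ord0 i).
Qed.

Lemma mulmx_cont (M : 'M[R]_n) : continuous (fun x : V => x *m M).
Proof.
under eq_fun do rewrite mulmx_sum_row.
apply: cont_sumV => i x; apply: continuousZr_tmp.
exact: coord_continuous.
Qed.

Lemma closed_poly (P : set V) : polyhedron P -> closed P.
Proof.
case=> m [a [b ->]].
have -> : [set x | forall i, dotp (a i) x <= b i] =
  \bigcap_(i in setT) ((fun x => dotp (a i) x) @^-1` [set y | y <= b i]).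
  by apply/seteqP; split => x /= H; [move=> i _; exact: H|move=> i; exact: (H i I)].
apply: closed_bigI => i _; apply: preimage_closed; last exact: closed_le.
by move=> x _; exact: dotp_cont.
Qed.

Lemma closed_itvX (P : set V) : closed P -> closed ((@setX R V `[0, 1]%classic P)).
Proof.
move=> cP.
have -> : (@setX R V `[0, 1]%classic P) =
  (fst @^-1` [set x : R | x \in `[0, 1]%R]) `&` (snd @^-1` P) by [].
apply: closedI; apply: preimage_closed.
- by move=> x _; exact: cvg_fst.
- exact: interval_closed.
- by move=> x _; exact: cvg_snd.
- exact: cP.
Qed.

End Topo.
Section Main.
Variables (R : realType) (n : nat).
Local Notation V := 'rV[R]_n.
Local Notation sl := (@slice R n).
Variable K : set (set V).
Hypothesis hK : polyhedral_complex K.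

Definition cellL (x : V) : set V := [set v | forall P, K P -> P x -> lin P v].

Lemma cellL_eq P x : K P -> P x -> cellL x = lin P.
Proof.
move=> KP Px; apply/seteqP; split => v H; first exact: H P KP Px.
by move=> Q KQ Qx; rewrite (lin_meet hK KQ KP Qx Px).
Qed.

Lemma finK : finite_set K.
Proof. by case: hK. Qed.

Lemma hom_slice : homotopy_equivalent (underlying K) (underlying (sl @` K)).
Proof.
pose f x := fm (cellL x) x.
exists f, id; split.
- split.
    rewrite /underlying; apply: (@paste _ _ _ K id) => //.
    + exact: finK.
    + by move=> P KP; exact: closed_poly (cell_poly hK KP).
    move=> P KP; apply: (@within_eq V V P f (fun x : V => x *m (1%:M - Pi (lin P)))).
      by move=> x Px; rewrite /f (cellL_eq KP Px) fmE.
    exact: mulmx_cont.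
  by apply: continuous_subspaceT => x; exact: cvg_id.
- move=> x [P KP Px]; exists (sl P); first by exists P.
  by rewrite /f (cellL_eq KP Px); exact: fm_in (cell_poly hK KP) Px.
- by move=> y [_ [P KP <-] [Py _]]; exists P.
- exists (fun p : R * V => p.2 - (1 - p.1) *: (p.2 *m Pi (cellL p.2))).
  split; [|split; [|split]].
  + have -> : @setX R V `[0, 1]%classic (underlying K) =
       \bigcup_(P in K) (@setX R V `[0, 1]%classic P).
      apply/seteqP; split => -[t x] /=.
        by case=> t01 [P KP Px]; exists P.
      by case=> P KP [t01 Px]; split => //; exists P.
    apply: (@paste _ _ _ K (fun P => @setX R V `[0, 1]%classic P)).
    * exact: finK.
    * by move=> P KP; apply: closed_itvX; exact: closed_poly (cell_poly hK KP).
    move=> P KP.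
    apply: (within_eq
      (g := fun p : R * V => p.2 - (1 - p.1) *: (p.2 *m Pi (lin P)))).
      by move=> [t x] [_ Px]; rewrite /= (cellL_eq KP Px).
    move=> p; apply: continuousB; first exact: cvg_snd.
    apply: continuousZ.
      apply: continuousB; first exact: cst_continuous.
      exact: cvg_fst.
    apply: (@continuous_comp _ _ _ snd (fun x : V => x *m Pi (lin P))); first exact: cvg_snd.
    exact: mulmx_cont.
  + move=> t x _ [P KP Px]; exists P => //=.
    rewrite (cellL_eq KP Px).
    have Lv := Pi_in x (lin_linlike (cell_poly hK KP)).
    by have := Lv x Px (- (1 - t)); rewrite scaleNr.
  + by move=> x _ /=; rewrite subr0 scale1r.
  + by move=> x _ /=; rewrite subrr scale0r subr0.
- exists (fun p : R * V => p.2); split; [|split; [|split]].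
  + by apply: continuous_subspaceT => p; exact: cvg_snd.
  + by move=> t x _ Hx.
  + move=> x [_ [P KP <-] [Px Wx]].
    by rewrite /= /f (cellL_eq KP Px) fm_id.
  + by [].
Qed.

End Main.

Theorem lemma4p5 (R : realType) (n : nat) (K : set (set 'rV[R]_n)) :
  polyhedral_complex K ->
  exists K' : set (set 'rV[R]_n),
    [/\ polyhedral_complex K',
        (forall C, K' C -> ~ contains_line C),
        homotopy_equivalent (underlying K) (underlying K') &
        card_eq K K'].
Proof.
move=> hK; exists (@slice R n @` K); split.
- exact: complex_slice.
- by move=> _ [P KP <-]; exact: slice_noline (cell_poly hK KP).
- exact: hom_slice.
- exact: slice_card.
Qed.
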